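(* Let $c>0$, $f_s>0$, let $M,N,K\ge1$ be integers, $T_{\max}=(N-1)/f_s$, $\bm{r}^{\mathrm{mic}}_1,\dots,\bm{r}^{\mathrm{mic}}_M\in\mathbb{R}^3$ with $E_M=\{\bm{r}^{\mathrm{mic}}_m\}$, $\bm{x}=(x_{m,n})\in\mathbb{R}^{MN}$. Let $\kappa$ be continuous with $\kappa(0)>0$ and $\lim_{|t|\to\infty}\kappa(t)=0$, and assume $\Gamma^K$ is amplitude lower-bounded. Then there exist an integer $K'\in\{0,\dots,K\}$, a pair $(\bm{a},\bm{r})\in\mathbb{R}_+^{K'}\times(\mathbb{R}^3\setminus E_M)^{K'}$ and $\widetilde{\bm{a}}\in\mathbb{R}_+^M$ such that, up to a permutation of the indices, $$\inf_{(\bm{a}',\bm{r}')\in\mathbb{R}_+^K\times\mathscr{C}^K}T(\bm{a}',\bm{r}')=\widetilde T(\bm{a},\bm{r},\widetilde{\bm{a}}):=\frac12\sum_{m=1}^M\sum_{n=0}^{N-1}\Big(x_{m,n}-\sum_{k=1}^{K'}a_k\gamma_{m,n}(\bm{r}_k)-\widetilde a_m\kappa(n/f_s)\Big)^2.$$ Moreover, there exists a minimizing sequence $(\bm{a}^l,\bm{r}^l)$ for this infimum such that $(a^l_k,\bm{r}^l_k)\to(a_k,\bm{r}_k)$ for all $k\in\{1,\dots,K'\}$ and $a^l_k\to0$ for $k\in\{K'+1,\dots,K\}$.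
   Context: $\mathbb{R}_+=[0,+\infty)$, $\|\cdot\|_2$ Euclidean norm. $T(\bm{a},\bm{r})=\frac12\|\bm{x}-\sum_{k=1}^K a_k\gamma(\bm{r}_k)\|_2^2$. For $\bm{r}\in\mathbb{R}^3\setminus E_M$, $\gamma_{m,n}(\bm{r})=\dfrac{\kappa\big(n/f_s-\|\bm{r}-\bm{r}^{\mathrm{mic}}_m\|_2/c\big)}{4\pi\|\bm{r}-\bm{r}^{\mathrm{mic}}_m\|_2}$, $1\le m\le M$, $0\le n\le N-1$. $\mathscr{C}=\bigcap_{m=1}^M\overline{B(\bm{r}^{\mathrm{mic}}_m,cT_{\max})}\setminus E_M$. $\Gamma^K(\bm{a},\bm{r})=\sum_k a_k\gamma(\bm{r}_k)$; it is amplitude lower-bounded if there is $C>0$ with $\|\Gamma^K(\bm{a},\bm{r})\|_2\ge C\sum_k a_k$ for all $(\bm{a},\bm{r})\in\mathbb{R}_+^K\times\mathscr{C}^K$. *)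

(* Defs.v *)
From HB Require Import structures.
From mathcomp Require Import all_boot all_order all_algebra.
From mathcomp Require Import fingroup perm.
From mathcomp Require Import all_classical all_reals all_analysis.
Set Implicit Arguments. Unset Strict Implicit. Unset Printing Implicit Defensive.
Import Order.TTheory GRing.Theory Num.Theory.
Import numFieldNormedType.Exports.
Local Open Scope ring_scope.
Local Open Scope classical_set_scope.

(* Euclidean norm of a row vector (the library norm on matrices is the max norm). *)
Definition enorm (R : realType) (d : nat) (v : 'rV[R]_d) : R :=
  Num.sqrt (\sum_(i < d) (v ord0 i) ^+ 2).

Definition Tmax (R : realType) (fs : R) (N : nat) : R := (N%:R - 1) / fs.

(* gamma_{m,n}(r) = kappa(n/f_s - ||r - r_m||/c) / (4 pi ||r - r_m||)
   (only meaningful for r not a microphone position). *)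
Definition gamma (R : realType) (c fs : R) (kappa : R -> R) (M : nat)
    (mic : 'I_M -> 'rV[R]_3) (r : 'rV[R]_3) (m : 'I_M) (n : nat) : R :=
  let d := enorm (r - mic m) in kappa (n%:R / fs - d / c) / (4 * pi * d).

Definition micset (R : realType) (M : nat) (mic : 'I_M -> 'rV[R]_3) : set 'rV[R]_3 :=
  [set r | exists m, r = mic m].

Definition regionC (R : realType) (c fs : R) (M N : nat)
    (mic : 'I_M -> 'rV[R]_3) : set 'rV[R]_3 :=
  [set r | (forall m : 'I_M, enorm (r - mic m) <= c * Tmax fs N) /\ ~ micset mic r].

Definition GammaK (R : realType) (c fs : R) (kappa : R -> R) (M K : nat)
    (mic : 'I_M -> 'rV[R]_3) (a : 'I_K -> R) (r : 'I_K -> 'rV[R]_3)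
    (m : 'I_M) (n : nat) : R :=
  \sum_(k < K) a k * gamma c fs kappa mic (r k) m n.

Definition costT (R : realType) (c fs : R) (kappa : R -> R) (M N K : nat)
    (mic : 'I_M -> 'rV[R]_3) (x : 'I_M -> 'I_N -> R)
    (a : 'I_K -> R) (r : 'I_K -> 'rV[R]_3) : R :=
  2^-1 * \sum_(m < M) \sum_(n < N) (x m n - GammaK c fs kappa mic a r m n) ^+ 2.

Definition costTt (R : realType) (c fs : R) (kappa : R -> R) (M N K' : nat)
    (mic : 'I_M -> 'rV[R]_3) (x : 'I_M -> 'I_N -> R)
    (a : 'I_K' -> R) (r : 'I_K' -> 'rV[R]_3) (at_ : 'I_M -> R) : R :=
  2^-1 * \sum_(m < M) \sum_(n < N)
    (x m n - GammaK c fs kappa mic a r m n - at_ m * kappa (n%:R / fs)) ^+ 2.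

Definition infT (R : realType) (c fs : R) (kappa : R -> R) (M N K : nat)
    (mic : 'I_M -> 'rV[R]_3) (x : 'I_M -> 'I_N -> R) : R :=
  inf [set t | exists (a : 'I_K -> R) (r : 'I_K -> 'rV[R]_3),
      (forall k, 0 <= a k) /\ (forall k, regionC c fs N mic (r k)) /\
      t = costT c fs kappa mic x a r].

Definition amplitude_lower_bounded (R : realType) (c fs : R) (kappa : R -> R)
    (M N K : nat) (mic : 'I_M -> 'rV[R]_3) : Prop :=
  exists C : R, 0 < C /\
    forall (a : 'I_K -> R) (r : 'I_K -> 'rV[R]_3),
      (forall k, 0 <= a k) -> (forall k, regionC c fs N mic (r k)) ->
      Num.sqrt (\sum_(m < M) \sum_(n < N) (GammaK c fs kappa mic a r m n) ^+ 2)
        >= C * \sum_(k < K) a k.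

(* Main.v *)
Require Import Defs.
From HB Require Import structures.
From mathcomp Require Import all_boot all_order all_algebra.
From mathcomp Require Import fingroup perm.
From mathcomp Require Import all_classical all_reals all_analysis.
From mathcomp Require Import lra zify ring.
Import Order.TTheory GRing.Theory Num.Theory.
Import numFieldNormedType.Exports.
Local Open Scope ring_scope.
Local Open Scope classical_set_scope.
Lemma perm_part (n : nat) (P : pred 'I_n) :
  exists s : {perm 'I_n}, forall i, P (s i) = (i < #|P|)%N.
Proof.
pose s := enum P ++ enum (predC P).
have ss : size s = n.
  by rewrite size_cat -!cardE cardC card_ord.
have us : uniq s.
  rewrite cat_uniq !enum_uniq /= andbT; apply/hasPn => x.
  by rewrite !mem_enum /= inE => ->.
pose f (i : 'I_n) := nth i s i.
have fi : injective f.
  move=> i j; rewrite /f => e.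
  have hi : (i < size s)%N by rewrite ss.
  have hj : (j < size s)%N by rewrite ss.
  apply/val_inj/eqP; rewrite -(nth_uniq i hi hj us).
  by rewrite e (set_nth_default j i) // ss.
exists (perm fi) => i; rewrite permE /f nth_cat.
have sz : (size (enum P) + size (enum (predC P)))%N = n by rewrite -size_cat.
rewrite cardE.
case: ltnP => h.
  have : nth i (enum P) i \in enum P by apply: mem_nth.
  by rewrite mem_enum.
have : nth i (enum (predC P)) (i - size (enum P)) \in enum (predC P).
  by apply: mem_nth; rewrite ltn_subLR // -size_cat -/s ss.
by rewrite mem_enum /= inE => /negbTE.
Qed.
Lemma incr_ge (f : nat -> nat) : increasing_seq f -> forall n, (n <= f n)%N.
Proof.
move=> /increasing_seqP fi; elim=> // n IH.
by apply: leq_ltn_trans IH _; exact: fi.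
Qed.

Lemma incr_comp (f g : nat -> nat) : increasing_seq f -> increasing_seq g ->
  increasing_seq (f \o g).
Proof.
move=> hf /increasing_seqP hg; apply/increasing_seqP => n /=.
have := hg n; rewrite !ltEnat /= => h1.
by rewrite -(leqW_mono hf) in h1.
Qed.

Lemma incr_cvg (T : topologicalType) (u : nat -> T) (f : nat -> nat) (p : T) :
  increasing_seq f -> u @ \oo --> p -> (u \o f) @ \oo --> p.
Proof.
move=> hf hu; apply: cvg_comp hu.
move=> P [N _ HP]; exists N => // n /= Hn; apply: HP => /=.
move: (incr_ge f hf n) Hn; lia.
Qed.

Lemma multi_bw (R : realType) (I : finType) (u : nat -> I -> R) (B : R) :
  (forall n i, `|u n i| <= B) ->
  exists f : nat -> nat, increasing_seq f /\ forall i, cvgn (fun n => u (f n) i).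
Proof.
move=> hB.
suff: forall s : seq I, exists f : nat -> nat,
    increasing_seq f /\ forall i, i \in s -> cvgn (fun n => u (f n) i).
  by case/(_ (enum I)) => f [hf h]; exists f; split => // i; apply: h; rewrite mem_enum.
elim=> [|j s [f [hf h]]].
  by exists id; split => // n m.
have bnd : bounded_fun (fun n => u (f n) j).
  exists B; split; first by rewrite num_real.
  move=> M hM n _; apply: le_trans (hB _ _) (ltW hM).
have [g hg cg] := bolzano_weierstrass bnd.
exists (f \o g); split; first exact: (incr_comp f g).
move=> i; rewrite in_cons => /orP[/eqP ->|/h ci]; first exact: cg.
move/cvg_ex: ci => [l hl]; apply/cvg_ex; exists l.
exact: (incr_cvg _ (fun n => u (f n) i) g _ hg hl).
Qed.
Lemma rV_cvg (R : realType) (n : nat) (v : nat -> 'rV[R]_n) (p : 'rV[R]_n) :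
  (forall i, (fun l => v l ord0 i) @ \oo --> p ord0 i) -> v @ \oo --> p.
Proof.
move=> h; apply/cvg_mx_entourageP => A entA.
have h2 : forall ij : 'I_1 * 'I_n, \forall l \near \oo, (p ij.1 ij.2, v l ij.1 ij.2) \in A.
  move=> [i j] /=; rewrite (ord1 i).
  have /cvg_entourageP /(_ A entA) := h j.
  by rewrite near_map; apply: filterS => l; rewrite inE.
rewrite near_map; apply: filterS (filter_forall _ h2) => l hl i j.
exact: (hl (i, j)).
Qed.
Lemma cvg_sumF (R : realType) (I : finType) (f : I -> nat -> R) (g : I -> R) :
  (forall i, f i @ \oo --> g i) ->
  (fun n => \sum_(i : I) f i n) @ \oo --> \sum_(i : I) g i.
Proof.
move=> h; apply: (@cvg_big _ _ +%R 0 xpredT _ _ _ (index_enum I) f g) => //.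
exact: add_continuous.
Qed.

Lemma multi_bw2 (R : realType) (I : finType) (u : nat -> I -> R) (B : R) :
  (forall n i, `|u n i| <= B) ->
  exists (f : nat -> nat) (p : I -> R), increasing_seq f /\
    forall i, (fun n => u (f n) i) @ \oo --> p i.
Proof.
move=> /multi_bw [f [hf h]].
have [p hp] := @choice _ _ (fun i l => (fun n => u (f n) i) @ \oo --> l)
  (fun i => (cvg_ex _).1 (h i)).
by exists f, p.
Qed.

Lemma enorm_cvg (R : realType) (n : nat) (v : nat -> 'rV[R]_n) (p : 'rV[R]_n) :
  (forall i, (fun l => v l ord0 i) @ \oo --> p ord0 i) ->
  (fun l => enorm (v l)) @ \oo --> enorm p.
Proof.
move=> h; rewrite /enorm.
apply: (continuous_cvg _ (@sqrt_continuous R _)).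
apply: cvg_sumF => i; rewrite expr2.
under eq_cvg do rewrite expr2.
exact: cvgM.
Qed.
Lemma e_bound_alg (R : realType) (K : nat) (a d kap : 'I_K -> R) (A G L0 de k0 cc q : R) :
  0 < cc -> 0 < de -> 0 < k0 -> 0 <= L0 -> 0 < q -> 0 <= G ->
  (forall k, 0 <= a k <= A) -> (forall k, 0 < d k) ->
  (forall k, d k < cc * de -> k0 / 2 < kap k) -> (forall k, - L0 <= kap k) ->
  \sum_k a k * (kap k / (q * d k)) <= G ->
  forall k, a k / d k <= A / (cc * de) + (G + K%:R * (A / (cc * de) * L0 / q)) * (2 * q / k0).
Proof.
move=> cc0 de0 k00 L00 q0 G0 ha hd hk hL hs k.
set E1 := A / (cc * de); set L := E1 * L0 / q.
have A0 : 0 <= A by case/andP: (ha k) => /le_trans; apply.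
have ccde : 0 < cc * de by rewrite mulr_gt0.
have E10 : 0 <= E1 by rewrite /E1 divr_ge0 // ltW.
have L0' : 0 <= L.
  by rewrite /L; apply: divr_ge0; [exact: mulr_ge0 | exact: ltW].
have tE : forall j, a j * (kap j / (q * d j)) = (a j / d j) * kap j / q.
  by move=> j; have := hd j; rewrite lt0r => /andP[dj _]; field; rewrite dj gt_eqF.
have ed0 : forall j, 0 <= a j / d j.
  by move=> j; case/andP: (ha j) => aj _; rewrite divr_ge0 // ltW.
have edE : forall j, cc * de <= d j -> a j / d j <= E1.
  move=> j hj; case/andP: (ha j) => aj0 ajA.
  rewrite /E1 (@le_trans _ _ (A / d j)) //.
    by rewrite ler_pM2r ?invr_gt0.
  by rewrite ler_wpM2l // lef_pV2 ?posrE // (lt_le_trans ccde hj).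
have tlb : forall j, - L <= a j / d j * kap j / q.
  move=> j; case: (ltP (d j) (cc * de)) => h.
    have kp : 0 < kap j by apply: lt_trans (hk j h); rewrite divr_gt0.
    apply: le_trans (_ : 0 <= _); first by rewrite oppr_le0.
    by apply: divr_ge0; [apply: mulr_ge0; [exact: ed0 | exact: ltW] | exact: ltW].
  rewrite /L -mulNr ler_pM2r ?invr_gt0 //.
  have := edE j h; have := ed0 j; have := hL j.
  set x := a j / d j; move=> h1 h2 h3; nra.
have tk : a k / d k * kap k / q <= G + K%:R * L.
  move: hs; rewrite (bigD1 k) //= tE => hs.
  have h1 : \sum_(j | j != k) (- L) <= \sum_(j | j != k) a j * (kap j / (q * d j)).
    by apply: ler_sum => j _; rewrite tE.
  have h2 : - (K%:R * L) <= \sum_(j | j != k) (- L).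
    rewrite sumr_const mulNrn -mulr_natl lerN2.
    rewrite mulr1 -[L *+ _]mulr_natl ler_wpM2r // ler_nat.
    by apply: leq_trans (max_card _) _; rewrite card_ord.
  lra.
have E2 : 0 <= (G + K%:R * L) * (2 * q / k0).
  by apply: mulr_ge0; [apply: addr_ge0 => //; apply: mulr_ge0 | apply: divr_ge0; apply: ltW => //; apply: mulr_gt0].
case: (ltP (d k) (cc * de)) => h; last first.
  by apply: le_trans (edE k h) _; rewrite lerDl.
have kk := hk k h; have ek := ed0 k.
apply: le_trans (_ : _ <= (G + K%:R * L) * (2 * q / k0)) _; last by rewrite lerDr.
move: tk; set x := a k / d k; set y := G + K%:R * L => tk.
have h1 : x * (k0 / 2) <= x * kap k by rewrite ler_wpM2l // ltW.
have h2 : x * kap k <= y * q by rewrite -ler_pdivrMr.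
rewrite mulrA ler_pdivlMr //.
lra.
Qed.
Lemma enorm_ge0 (R : realType) (n : nat) (v : 'rV[R]_n) : 0 <= enorm v.
Proof. exact: sqrtr_ge0. Qed.

Lemma enorm_eq0 (R : realType) (n : nat) (v : 'rV[R]_n) : enorm v = 0 -> v = 0.
Proof.
move/eqP; rewrite /enorm sqrtr_eq0 => hs.
have hs0 : \sum_(i < n) v ord0 i ^+ 2 = 0.
  by apply/eqP; rewrite eq_le hs sumr_ge0 // => i _; exact: sqr_ge0.
apply/rowP => i; rewrite mxE; apply/eqP; rewrite -sqrf_eq0.
move/eqP: hs0; rewrite psumr_eq0 => [/allP /(_ i) h|j _]; last exact: sqr_ge0.
by apply: h; rewrite mem_index_enum.
Qed.

Lemma ler_term_sum (R : realType) (I : finType) (F : I -> R) i :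
  (forall j, 0 <= F j) -> F i <= \sum_j F j.
Proof.
by move=> h; rewrite (bigD1 i) //= lerDl; apply: sumr_ge0 => j _.
Qed.

Lemma enorm_entry (R : realType) (n : nat) (v : 'rV[R]_n) i : `|v ord0 i| <= enorm v.
Proof.
rewrite /enorm -sqrtr_sqr ler_sqrt; last by apply: sumr_ge0 => j _; exact: sqr_ge0.
by apply: (ler_term_sum _ _ (fun j => v ord0 j ^+ 2)) => j; exact: sqr_ge0.
Qed.

Lemma sqrt_le1 (R : realType) (y : R) : 0 <= y -> Num.sqrt y <= 1 + y.
Proof.
move=> y0; have s0 := sqrtr_ge0 y; have := sqr_sqrtr y0.
set s := Num.sqrt y => hs; rewrite -hs; nra.
Qed.

Lemma le_sq1 (R : realType) (y : R) : y <= 1 + y ^+ 2.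
Proof. nra. Qed.
Lemma cvg_ge0 (R : realType) (u : nat -> R) (l : R) :
  (forall n, 0 <= u n) -> u @ \oo --> l -> 0 <= l.
Proof.
move=> hu hl; rewrite leNgt; apply/negP => l0.
have [N _ HN] := @cvgr_lt _ _ _ _ u l hl 0 l0.
by have := HN N (leqnn N); rewrite ltNge hu.
Qed.

Lemma enorm0 (R : realType) (n : nat) : enorm (0 : 'rV[R]_n) = 0.
Proof. by rewrite /enorm big1 ?sqrtr0 // => i _; rewrite mxE expr0n. Qed.
Section Main.
Variables (R : realType) (c fs : R) (M N K : nat)
    (mic : 'I_M -> 'rV[R]_3) (xs : 'I_M -> 'I_N -> R) (kappa : R -> R).
Hypotheses (c0 : 0 < c) (fs0 : 0 < fs) (M0 : (0 < M)%N) (N0 : (0 < N)%N) (K0 : (0 < K)%N)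
  (kc : continuous kappa) (k0 : 0 < kappa 0)
  (alb : amplitude_lower_bounded c fs kappa N K mic)
  (r0 : 'rV[R]_3) (hr0 : regionC c fs N mic r0).

Local Notation reg := (regionC c fs N mic).
Local Notation cT := (costT c fs kappa mic xs).
Local Notation I := (infT c fs kappa K mic xs).

Lemma costT_ge0 (a : 'I_K -> R) (r : 'I_K -> 'rV[R]_3) : 0 <= cT a r.
Proof.
rewrite /costT mulr_ge0 ?invr_ge0 ?ler0n //.
by apply: sumr_ge0 => m _; apply: sumr_ge0 => n _; exact: sqr_ge0.
Qed.

Lemma minseq : exists (al : nat -> 'I_K -> R) (rl : nat -> 'I_K -> 'rV[R]_3),
  (forall l k, 0 <= al l k) /\ (forall l k, reg (rl l k)) /\
  (forall l, cT (al l) (rl l) <= I + 1) /\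
  cT (al l) (rl l) @[l --> \oo] --> I.
Proof.
set S := [set t | exists (a : 'I_K -> R) (r : 'I_K -> 'rV[R]_3),
      (forall k, 0 <= a k) /\ (forall k, reg (r k)) /\ t = cT a r].
have IS : I = inf S by [].
have hS : has_inf S.
  split; first by exists (cT (fun _ : 'I_K => 0) (fun _ : 'I_K => r0)), (fun=> 0), (fun=> r0).
  by exists 0 => t [a [r [_ [_ ->]]]]; exact: costT_ge0.
have lbS : lbound S I by rewrite IS; exact: ge_inf hS.2.
have h : forall l : nat, exists p : ('I_K -> R) * ('I_K -> 'rV[R]_3),
    [/\ forall k, 0 <= p.1 k, forall k, reg (p.2 k) & cT p.1 p.2 < I + l.+1%:R^-1].
  move=> l; have [t [a [r [ha [hr ->]]]] ht] := inf_adherent (harmonic_gt0 l) hS.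
  by exists (a, r); split.
have [p hp] := choice h.
exists (fun l => (p l).1), (fun l => (p l).2).
have lbI : forall l, I <= cT (p l).1 (p l).2.
  by move=> l; apply: lbS; exists (p l).1, (p l).2; have [? ? _] := hp l.
have ubI : forall l, cT (p l).1 (p l).2 <= I + l.+1%:R^-1.
  by move=> l; have [_ _ /ltW] := hp l.
split; first by move=> l k; have [+ _ _] := hp l; apply.
split; first by move=> l k; have [_ + _] := hp l; apply.
split.
  move=> l; apply: le_trans (ubI l) _; rewrite lerD2l invf_le1 ?ler1n //.
apply: (@squeeze_cvgr _ _ _ _ (fun=> I) (fun l => I + l.+1%:R^-1)).
- by near=> l; rewrite lbI ubI.
- exact: cvg_cst.
- rewrite -[X in _ --> X]addr0; apply: cvgD; first exact: cvg_cst.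
  exact: cvg_harmonic.
Unshelve. all: by end_near.
Qed.


Lemma sqG (a : 'I_K -> R) (r : 'I_K -> 'rV[R]_3) :
  \sum_(m < M) \sum_(n < N) (GammaK c fs kappa mic a r m n) ^+ 2 <=
  2 * \sum_(m < M) \sum_(n < N) (xs m n) ^+ 2 + 4 * cT a r.
Proof.
rewrite /costT mulrA (_ : 4 * 2^-1 = 2 :> R); last by field.
rewrite !mulr_sumr -big_split /=; apply: ler_sum => m _.
rewrite !mulr_sumr -big_split /=; apply: ler_sum => n _.
have := sqr_ge0 (2 * xs m n - GammaK c fs kappa mic a r m n).
set g := GammaK _ _ _ _ _ _ _ _; set x := xs m n; nra.
Qed.

Lemma bounds : exists A Eb B3 : R, forall (a : 'I_K -> R) (r : 'I_K -> 'rV[R]_3),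
  (forall k, 0 <= a k) -> (forall k, reg (r k)) -> cT a r <= I + 1 ->
  [/\ (forall k, a k <= A), (forall k m, a k / enorm (r k - mic m) <= Eb) & (forall k i, `|r k ord0 i| <= B3)].
Proof.
set X := \sum_(m < M) \sum_(n < N) (xs m n) ^+ 2.
have X0 : 0 <= X by apply: sumr_ge0 => m _; apply: sumr_ge0 => n _; exact: sqr_ge0.
have I0 : 0 <= I.
  apply: lb_le_inf.
    by exists (cT (fun _ : 'I_K => 0) (fun _ : 'I_K => r0)), (fun=> 0), (fun=> r0).
  by move=> t [a [r [_ [_ ->]]]]; exact: costT_ge0.
set G := 1 + (2 * X + 4 * (I + 1)).
have G0 : 0 <= G by rewrite /G; lra.
have [C [C0 hC]] := alb.
have [de de0 hde] : exists2 de : R, 0 < de & forall t : R, `|t| < de -> kappa 0 / 2 < kappa t.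
  have : kappa 0 / 2 < kappa 0 by rewrite ltr_pdivrMr // ltr_pMr // ltr1n.
  move=> h; have := @cvgr_gt _ _ _ _ kappa (kappa 0) (kc 0) _ h.
  move=> H; have [e e0 he] := (nbhs_ballP _ _).1 (H _).
  exists e => // t ht.
  apply: he; rewrite /ball /= sub0r normrN //.
have Tm0 : 0 <= Tmax fs N.
  rewrite /Tmax divr_ge0 ?(ltW fs0) // subr_ge0 ler1n //.
have [cm _ hcm] : exists2 cm, cm \in `[- Tmax fs N, 0]%R &
    forall t, t \in `[- Tmax fs N, 0]%R -> kappa cm <= kappa t.
  apply: EVT_min; first by rewrite oppr_le0.
  exact: continuous_subspaceT.
set L0 := `|kappa cm|.
set A := G / C.
pose m0 : 'I_M := Ordinal M0.
pose n0 : 'I_N := Ordinal N0.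
exists A, (A / (c * de) + (G + K%:R * (A / (c * de) * L0 / (4 * pi))) * (2 * (4 * pi) / kappa 0)),
  (\sum_i `|mic m0 ord0 i| + c * Tmax fs N).
move=> a r ha hr hc.
have hG : \sum_(m < M) \sum_(n < N) (GammaK c fs kappa mic a r m n) ^+ 2 <= G - 1.
  apply: le_trans (sqG a r) _; rewrite /G /X; lra.
have hA : forall k, a k <= A.
  move=> k; apply: le_trans (ler_term_sum _ _ a k ha) _.
  rewrite /A ler_pdivlMr // mulrC; have hCa := hC a r ha hr; apply: (le_trans hCa).
  apply: le_trans (sqrt_le1 _ _ _) _; last by lra.
  by apply: sumr_ge0 => m _; apply: sumr_ge0 => n _; exact: sqr_ge0.
split => //.
  move=> k m.
  have hd : forall j, 0 < enorm (r j - mic m).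
    move=> j; rewrite lt0r enorm_ge0 andbT; apply/eqP => /enorm_eq0 /eqP.
    by rewrite subr_eq0 => /eqP e; case: (hr j) => _; apply; exists m.
  have hpi : 0 < 4 * pi :> R by rewrite mulr_gt0 // pi_gt0.
  have ha2 : forall j, 0 <= a j <= A by move=> j; rewrite ha hA.
  have hk : forall j, enorm (r j - mic m) < c * de ->
      kappa 0 / 2 < kappa (0%:R / fs - enorm (r j - mic m) / c).
    move=> j hj; apply: hde; rewrite mul0r sub0r normrN ger0_norm.
      by rewrite ltr_pdivrMr // mulrC.
    by rewrite divr_ge0 ?(ltW c0) ?enorm_ge0.
  have hL : forall j, - L0 <= kappa (0%:R / fs - enorm (r j - mic m) / c).
    move=> j; apply: le_trans (hcm _ _); first by rewrite /L0; have := ler_norm (- kappa cm); rewrite normrN; lra.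
    rewrite in_itv /= mul0r sub0r lerN2 oppr_le0 divr_ge0 ?(ltW c0) ?enorm_ge0 // andbT.
    by rewrite ler_pdivrMr // mulrC; case: (hr j) => /(_ m).
  have hs : \sum_j a j * (kappa (0%:R / fs - enorm (r j - mic m) / c) /
      (4 * pi * enorm (r j - mic m))) <= G.
    have -> : \sum_j a j * (kappa (0%:R / fs - enorm (r j - mic m) / c) /
      (4 * pi * enorm (r j - mic m))) = GammaK c fs kappa mic a r m n0 by [].
    apply: le_trans (le_sq1 _ _) _.
    rewrite -lerBrDl; apply: le_trans hG.
    apply: le_trans (ler_term_sum _ _ (fun m => \sum_(n < N) GammaK c fs kappa mic a r m n ^+ 2) m _).
      exact: (ler_term_sum _ _ (fun n : 'I_N => GammaK c fs kappa mic a r m n ^+ 2) n0 (fun n => sqr_ge0 _)).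
    by move=> m'; apply: sumr_ge0 => n _; exact: sqr_ge0.
  exact: (e_bound_alg _ _ a (fun j => enorm (r j - mic m))
    (fun j => kappa (0%:R / fs - enorm (r j - mic m) / c)) A G L0 de (kappa 0) c (4 * pi)
    c0 de0 k0 (normr_ge0 _) hpi G0 ha2 hd hk hL hs k).
move=> k i.
have h1 := enorm_entry _ _ (r k - mic m0) i; rewrite !mxE in h1.
have h2 : enorm (r k - mic m0) <= c * Tmax fs N by case: (hr k) => /(_ m0).
have h3 := ler_term_sum _ _ (fun i => `|mic m0 ord0 i|) i (fun _ => normr_ge0 _).
have h4 := ler_normD (r k ord0 i - mic m0 ord0 i) (mic m0 ord0 i).
rewrite subrK in h4; simpl in h3; lra.
Qed.


Lemma d_pos (r : 'rV[R]_3) m : reg r -> 0 < enorm (r - mic m).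
Proof.
move=> hr; rewrite lt0r enorm_ge0 andbT; apply/eqP => /enorm_eq0 /eqP.
by rewrite subr_eq0 => /eqP e; case: hr => _; apply; exists m.
Qed.

Lemma main_sec :
  exists (K' : nat) (HK : (K' <= K)%N)
         (a : 'I_K' -> R) (r : 'I_K' -> 'rV[R]_3) (at_ : 'I_M -> R),
    (forall k, 0 <= a k) /\ (forall k, ~ micset mic (r k)) /\
    (forall m, 0 <= at_ m) /\
    exists sigma : {perm 'I_K},
      infT c fs kappa K mic xs = costTt c fs kappa mic xs a r at_ /\
      exists (al : nat -> 'I_K -> R) (rl : nat -> 'I_K -> 'rV[R]_3),
        (forall l k, 0 <= al l k) /\
        (forall l k, regionC c fs N mic (rl l k)) /\
        costT c fs kappa mic xs (al l) (rl l) @[l --> \oo] --> infT c fs kappa K mic xs /\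
        (forall k : 'I_K',
            al l (sigma (widen_ord HK k)) @[l --> \oo] --> a k /\
            rl l (sigma (widen_ord HK k)) @[l --> \oo] --> r k) /\
        (forall k : 'I_K, (K' <= k)%N -> al l (sigma k) @[l --> \oo] --> 0).
Proof.
have [al0 [rl0 [hal0 [hrl0 [hcub hcv]]]]] := minseq.
have [A [Eb [B3 hb]]] := bounds.
pose e0 l k m := al0 l k / enorm (rl0 l k - mic m).
pose u (l : nat) (t : ('I_K + ('I_K * 'I_3)) + ('I_K * 'I_M)) : R :=
  match t with
  | inl (inl k) => al0 l k
  | inl (inr (k, i)) => rl0 l k ord0 i
  | inr (k, m) => e0 l k m
  end.
have hu : forall l t, `|u l t| <= `|A| + `|Eb| + `|B3|.
  move=> l t; have [hA hE hB] := hb _ _ (hal0 l) (hrl0 l) (hcub l).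
  have n1 := normr_ge0 A; have n2 := normr_ge0 Eb; have n3 := normr_ge0 B3.
  case: t => [[k|[k i]]|[k m]] /=.
  - rewrite ger0_norm //; have := hA k; have := ler_norm A; lra.
  - have := hB k i; have := ler_norm B3; lra.
  - rewrite ger0_norm; last by rewrite divr_ge0 ?enorm_ge0.
    have := hE k m; have := ler_norm Eb; rewrite /e0; lra.
have [phi [p [hphi hp]]] := multi_bw2 _ _ u _ hu.
pose al l := al0 (phi l); pose rl l := rl0 (phi l).
pose alpha k := p (inl (inl k)).
pose rho k : 'rV[R]_3 := \row_i p (inl (inr (k, i))).
pose eps k m := p (inr (k, m)).
pose D k m := enorm (rho k - mic m).
have ha_cv : forall k, (fun l => al l k) @ \oo --> alpha k := fun k => hp (inl (inl k)).
have hr_cv : forall k i, (fun l => rl l k ord0 i) @ \oo --> rho k ord0 i.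
  by move=> k i; rewrite mxE; exact: (hp (inl (inr (k, i)))).
have he_cv : forall k m, (fun l => al l k / enorm (rl l k - mic m)) @ \oo --> eps k m.
  by move=> k m; exact: (hp (inr (k, m))).
have hd_cv : forall k m, (fun l => enorm (rl l k - mic m)) @ \oo --> D k m.
  move=> k m; apply: enorm_cvg => i.
  under eq_cvg do rewrite !mxE.
  rewrite !mxE; apply: cvgB; [exact: (hp (inl (inr (k, i)))) | exact: cvg_cst].
have key : forall k m, alpha k = eps k m * D k m.
  move=> k m; have h := cvgM (he_cv k m) (hd_cv k m).
  have e : ((fun l => al l k / enorm (rl l k - mic m)) \* (fun l => enorm (rl l k - mic m))) = (fun l => al l k).
    by apply/funext => l; rewrite /= divfK // gt_eqF // d_pos //; exact: hrl0.
  rewrite /= e in h.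
  have h2 := h eventually_filter; move: (ha_cv k) h2; exact: cvg_unique.
have pi0 : (pi : R) != 0 by rewrite gt_eqF // pi_gt0.
pose Gs m (n : nat) := \sum_k eps k m * (kappa (n%:R / fs - D k m / c) / (4 * pi)).
have hG_cv : forall m (n : nat),
    (fun l => GammaK c fs kappa mic (al l) (rl l) m n) @ \oo --> Gs m n.
  move=> m n.
  have e : (fun l => GammaK c fs kappa mic (al l) (rl l) m n) =
      (fun l => \sum_k (al l k / enorm (rl l k - mic m)) *
         (kappa (n%:R / fs - enorm (rl l k - mic m) / c) / (4 * pi))).
    apply/funext => l; apply: eq_bigr => k _; rewrite /gamma /=.
    have := d_pos _ m (hrl0 (phi l) k); set d := enorm _ => dp.
    by move: (4 * pi) => q; rewrite invfM; ring.
  rewrite e; apply: cvg_sumF => k; apply: cvgM; first exact: he_cv.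
  apply: cvgM; last exact: cvg_cst.
  apply: continuous_cvg; first exact: kc.
  apply: cvgB; first exact: cvg_cst.
  apply: cvgM; [exact: hd_cv | exact: cvg_cst].
have hc_cv : (fun l => cT (al l) (rl l)) @ \oo -->
    2^-1 * \sum_(m < M) \sum_(n < N) (xs m n - Gs m n) ^+ 2.
  rewrite /costT; apply: cvgM; first exact: cvg_cst.
  apply: cvg_sumF => m; apply: cvg_sumF => n.
  under eq_cvg do rewrite expr2.
  rewrite expr2; apply: cvgM; (apply: cvgB; [exact: cvg_cst | exact: hG_cv]).
have hI : I = 2^-1 * \sum_(m < M) \sum_(n < N) (xs m n - Gs m n) ^+ 2.
  have h1 := incr_cvg _ (fun l => cT (al0 l) (rl0 l)) phi I hphi hcv.
  move: h1 hc_cv; exact: cvg_unique.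
pose P := [pred k : 'I_K | [forall m, D k m != 0]].
have [sigma hsig] := perm_part K P.
have HK : (#|P| <= K)%N by rewrite -[X in (_ <= X)%N]card_ord max_card.
have alpha0 : forall k, 0 <= alpha k.
  by move=> k; apply: (cvg_ge0 _ _ _ _ (ha_cv k)) => l; exact: hal0.
have eps0 : forall k m, 0 <= eps k m.
  move=> k m; apply: (cvg_ge0 _ _ _ _ (he_cv k m)) => l.
  by rewrite divr_ge0 ?hal0 ?enorm_ge0.
have notP : forall k, ~~ P k -> alpha k = 0.
  move=> k; rewrite inE negb_forall => /existsP [m]; rewrite negbK => /eqP Dm.
  by rewrite (key k m) Dm mulr0.
have Pgood : forall k m, P k -> D k m != 0.
  by move=> k m; rewrite inE => /forallP; apply.
exists #|P|, HK, (fun k => alpha (sigma (widen_ord HK k))),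
  (fun k => rho (sigma (widen_ord HK k))),
  (fun m => \sum_(k | ~~ P k) eps k m / (4 * pi)).
split; first by move=> k.
split.
  move=> k [m hm].
  have : P (sigma (widen_ord HK k)) by rewrite hsig /=.
  move/(Pgood _ m); rewrite /D hm subrr enorm0 eqxx //.
split.
  move=> m; apply: sumr_ge0 => k _; apply: divr_ge0 => //.
  by rewrite mulr_ge0 // pi_ge0.
exists sigma; split.
  rewrite hI /costTt; congr (_ * _); apply: eq_bigr => m _; apply: eq_bigr => n _.
  congr (_ ^+ 2); rewrite -addrA -opprD; congr (_ - _).
  have q0 : 4 * pi != 0 :> R by rewrite mulf_neq0.
  rewrite /Gs (bigID P) /=; congr (_ + _).
    rewrite (eq_bigr (fun k => alpha k * gamma c fs kappa mic (rho k) m n)); last first.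
      move=> k Pk; rewrite /gamma /= (key k m) -/(D k m).
      have Dn := Pgood k m Pk.
      by move: (4 * pi) q0 => q q0; field; rewrite Dn q0.
    rewrite (reindex_inj (h:=sigma)) /=; last exact: perm_inj.
    rewrite (eq_bigl (fun k : 'I_K => (k < #|P|)%N)); last by move=> k; exact: hsig.
    by rewrite (big_ord_narrow HK).
  rewrite mulr_suml; apply: eq_bigr => k nPk.
  have := key k m; rewrite notP // => /esym /eqP; rewrite mulf_eq0 => /orP[/eqP -> | /eqP ->].
    by rewrite !mul0r.
  rewrite mul0r subr0; move: (4 * pi) => q; ring.
exists al, rl.
split; first by move=> l k; exact: hal0.
split; first by move=> l k; exact: hrl0.
split; first exact: (incr_cvg _ (fun l => cT (al0 l) (rl0 l)) phi I hphi hcv).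
split.
  move=> k; split; first exact: ha_cv.
  by apply: rV_cvg => i; exact: hr_cv.
move=> k hk; rewrite -(notP (sigma k)); first exact: ha_cv.
by rewrite hsig -leqNgt.
Qed.

End Main.

Theorem lemma2 (R : realType) (c fs : R) (M N K : nat)
    (mic : 'I_M -> 'rV[R]_3) (xs : 'I_M -> 'I_N -> R) (kappa : R -> R) :
  0 < c -> 0 < fs -> (0 < M)%N -> (0 < N)%N -> (0 < K)%N ->
  continuous kappa -> 0 < kappa 0 ->
  kappa t @[t --> +oo%R] --> 0%R -> kappa t @[t --> -oo%R] --> 0%R ->
  amplitude_lower_bounded c fs kappa N K mic ->
  (exists r0, regionC c fs N mic r0) ->
  exists (K' : nat) (HK : (K' <= K)%N)
         (a : 'I_K' -> R) (r : 'I_K' -> 'rV[R]_3) (at_ : 'I_M -> R),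
    (forall k, 0 <= a k) /\ (forall k, ~ micset mic (r k)) /\
    (forall m, 0 <= at_ m) /\
    exists sigma : {perm 'I_K},
      infT c fs kappa K mic xs = costTt c fs kappa mic xs a r at_ /\
      exists (al : nat -> 'I_K -> R) (rl : nat -> 'I_K -> 'rV[R]_3),
        (forall l k, 0 <= al l k) /\
        (forall l k, regionC c fs N mic (rl l k)) /\
        costT c fs kappa mic xs (al l) (rl l) @[l --> \oo] --> infT c fs kappa K mic xs /\
        (forall k : 'I_K',
            al l (sigma (widen_ord HK k)) @[l --> \oo] --> a k /\
            rl l (sigma (widen_ord HK k)) @[l --> \oo] --> r k) /\
        (forall k : 'I_K, (K' <= k)%N -> al l (sigma k) @[l --> \oo] --> 0).
Proof.
move=> c0 fs0 M0 N0 K0 kc k0 _ _ alb [r0 hr0].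
exact: (@main_sec R c fs M N K mic xs kappa c0 fs0 M0 N0 kc k0 alb r0 hr0).
Qed.
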